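(* Let $\Pi$ be a ''linear model'' on a finite set $\mathcal X$, in the following sense: $\Pi$ is a convex set of probability distributions on $\mathcal X$, and for every probability distribution $\mathsf p$ on $\mathcal X$ there is a unique minimizer $\pi^*(\mathsf p)$ of $\pi\mapsto D_{KL}(\mathsf p\|\pi)$ over $\Pi$, which satisfies the Pythagorean identity $D_{KL}(\mathsf p\|\pi)=D_{KL}(\mathsf p\|\pi^*(\mathsf p))+D_{KL}(\pi^*(\mathsf p)\|\pi)$ for all $\pi\in\Pi$. Let $\hat{\mathsf p}_1,\dots,\hat{\mathsf p}_p$ be probability distributions on $\mathcal X$ with $D_{KL}(\hat{\mathsf p}_k\|\pi^*(\hat{\mathsf p}_k))<\infty$ for each $k$, set $\pi_k=\pi^*(\hat{\mathsf p}_k)$, and let $\lambda\in\Delta$. Then $$\pi^*(\hat{\mathsf p}_\lambda)=\sum_{k=1}^p\lambda_k\pi_k .$$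
   Context: Fix an integer $p\ge 1$, $\Delta=\{\lambda\in\mathbb R^p:\lambda_k\ge 0,\ \sum_k\lambda_k=1\}$, and $\hat{\mathsf p}_\lambda=\sum_k\lambda_k\hat{\mathsf p}_k$. $D_{KL}(P\|Q)=\sum_xP(x)\log\frac{P(x)}{Q(x)}\in[0,\infty]$ with conventions $0\log\frac0q=0$, $a\log\frac a0=+\infty$ for $a>0$. *)

(* Defs.v *)
From HB Require Import structures.
From mathcomp Require Import all_boot all_order all_algebra.
From mathcomp Require Import all_classical all_reals.
From mathcomp Require Import ereal sequences exp.
Set Implicit Arguments. Unset Strict Implicit. Unset Printing Implicit Defensive.
Import Order.TTheory GRing.Theory Num.Theory.
Local Open Scope ring_scope.

Section Defs.
Variables (R : realType) (X : finType).

Definition is_distr (P : X -> R) : Prop :=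
  (forall x, 0 <= P x) /\ \sum_(x : X) P x = 1.

Definition KL (P Q : X -> R) : \bar R :=
  (\sum_(x : X)
     (if P x == 0%R then 0%E
      else if Q x == 0%R then +oo%E
      else (P x * ln (P x / Q x))%R%:E))%E.

Definition in_simplex (p : nat) (lam : 'I_p -> R) : Prop :=
  (forall k, 0 <= lam k) /\ \sum_(k < p) lam k = 1.

Definition mix (p : nat) (lam : 'I_p -> R) (P : 'I_p -> X -> R) : X -> R :=
  fun x => \sum_(k < p) lam k * P k x.

End Defs.

(* Main.v *)
Require Import Defs.
From HB Require Import structures.
From mathcomp Require Import all_boot all_order all_algebra.
From mathcomp Require Import all_classical all_reals.
From mathcomp Require Import ereal sequences exp.
From mathcomp Require Import lra.
Import Order.TTheory GRing.Theory Num.Theory.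
Set Implicit Arguments. Unset Strict Implicit.
Local Open Scope ring_scope.

Section Helpers.
Variables (R : realType) (X : finType).
Implicit Types (P Q : X -> R).

Definition Lf P Q : R := \sum_(x : X) P x * ln (P x / Q x).
Definition Hn P : R := \sum_(x : X) P x * ln (P x).
Definition Cr P Q : R := \sum_(x : X) P x * ln (Q x).
Definition supp P Q := forall x, P x != 0 -> Q x != 0.

Lemma KL_fin P Q : supp P Q -> KL P Q = (Lf P Q)%:E.
Proof.
move=> hs; rewrite /KL /Lf -sumEFin; apply: eq_bigr => x _.
case: ifPn => [/eqP->|Px]; first by rewrite mul0r.
by rewrite (negbTE (hs x Px)).
Qed.

Lemma KL_oo P Q x : P x != 0 -> Q x = 0 -> KL P Q = +oo%E.
Proof.
move=> Px Qx; rewrite /KL; apply/esum_eqyP.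
  by move=> i _; case: ifP => //; case: ifP.
by exists x; split => //; rewrite (negbTE Px) Qx eqxx.
Qed.

Lemma KL_supp P Q : (KL P Q < +oo)%E -> supp P Q.
Proof.
move=> h x Px; apply/negP => /eqP Qx.
by rewrite (KL_oo Px Qx) ltxx in h.
Qed.

Lemma Lf_split P Q : (forall x, 0 <= P x) -> (forall x, 0 <= Q x) ->
  supp P Q -> Lf P Q = Hn P - Cr P Q.
Proof.
move=> hP hQ hs; rewrite /Lf /Hn /Cr -sumrB; apply: eq_bigr => x _.
have [->|Px0] := eqVneq (P x) 0; first by rewrite !mul0r subr0.
have Qx0 := hs x Px0.
rewrite ln_div ?mulrBr // posrE lt_def ?Px0 ?Qx0 ?hP ?hQ //.
Qed.

Lemma gibbs m q : is_distr m -> is_distr q -> supp m q -> Cr m q <= Cr m m.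
Proof.
move=> [hm0 hm1] [hq0 hq1] hs; rewrite -subr_le0 /Cr -sumrB.
have E : \sum_(x : X) (q x - m x) = 0 by rewrite sumrB hm1 hq1 subrr.
apply: (@le_trans _ _ (\sum_(x : X) (q x - m x))); last by rewrite E.
apply: ler_sum => x _.
have [->|mx0] := eqVneq (m x) 0; first by rewrite !mul0r subrr subr0.
have qx0 := hs x mx0.
have mp : 0 < m x by rewrite lt_def mx0 hm0.
have qp : 0 < q x by rewrite lt_def qx0 hq0.
rewrite -mulrBr -ln_div ?posrE //.
have h1 := @le_ln1Dx R (q x / m x - 1).
rewrite [1 + _]addrC subrK in h1.
have : m x * ln (q x / m x) <= m x * (q x / m x - 1).
  apply: ler_wpM2l; first exact: hm0.
  apply: h1; have := divr_gt0 qp mp; lra.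
by rewrite mulrBr mulr1 mulrCA divff // mulr1.
Qed.



Lemma mix_in (Pi : (X -> R) -> Prop)
  (conv : forall q1 q2 (t : R), Pi q1 -> Pi q2 -> 0 <= t <= 1 ->
      Pi (fun x => t * q1 x + (1 - t) * q2 x)) n (lam : 'I_n -> R) (Q : 'I_n -> X -> R) :
  (forall k, 0 <= lam k) -> \sum_(k < n) lam k = 1 -> (forall k, Pi (Q k)) ->
  Pi (mix lam Q).
Proof.
elim: n lam Q => [|n IH] lam Q l0 l1 HQ.
  by move: l1; rewrite big_ord0 => /eqP; rewrite eq_sym oner_eq0.
rewrite big_ord_recl in l1.
set s := \sum_(i < n) lam (lift ord0 i) in l1.
have s0 : 0 <= s by apply: sumr_ge0 => i _.
have [s_eq0|s_ne0] := eqVneq s 0.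
  have lz := psumr_eq0P (fun i _ => l0 (lift ord0 i)) s_eq0.
  have -> : mix lam Q = Q ord0.
    apply: funext => x; rewrite /mix big_ord_recl big1 => [|i _]; last by rewrite lz // mul0r.
    have -> : lam ord0 = 1 by lra.
    by rewrite addr0 mul1r.
  exact: HQ.
have sp : 0 < s by rewrite lt_def s_ne0 s0.
pose lam' := fun i : 'I_n => lam (lift ord0 i) / s.
have H' : Pi (mix lam' (fun i => Q (lift ord0 i))).
  apply: IH.
  - by move=> k; rewrite /lam' divr_ge0.
  - by rewrite /lam' -mulr_suml divff.
  - by move=> k; exact: HQ.
have := conv _ _ (lam ord0) (HQ ord0) H'.
have -> : (fun x => lam ord0 * Q ord0 x + (1 - lam ord0) * mix lam' (fun i => Q (lift ord0 i)) x) = mix lam Q.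
  apply: funext => x; rewrite /mix big_ord_recl; congr (_ + _).
  have -> : 1 - lam ord0 = s by lra.
  rewrite mulr_sumr; apply: eq_bigr => i _; rewrite /lam' mulrA mulrCA divff // mulr1.
  done.
apply; apply/andP; split; [exact: l0 | lra].
Qed.

Lemma mix_ge n (lam : 'I_n -> R) (Q : 'I_n -> X -> R) k x :
  (forall k, 0 <= lam k) -> (forall k x, 0 <= Q k x) -> lam k * Q k x <= mix lam Q x.
Proof.
move=> l0 q0; rewrite /mix (bigD1 k) //= lerDl.
by apply: sumr_ge0 => i _; rewrite mulr_ge0.
Qed.

Lemma mix_nz n (lam : 'I_n -> R) (Q : 'I_n -> X -> R) x :
  mix lam Q x != 0 -> exists k, lam k != 0 /\ Q k x != 0.
Proof.
move=> h; apply: contrapT => nE; apply/negP: h; rewrite negbK /mix; apply/eqP.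
apply: big1 => k _; have [->|lk] := eqVneq (lam k) 0; first by rewrite mul0r.
have [->|qk] := eqVneq (Q k x) 0; first by rewrite mulr0.
by exfalso; apply: nE; exists k.
Qed.

Lemma Cr_mix n (lam : 'I_n -> R) (Q : 'I_n -> X -> R) q :
  Cr (mix lam Q) q = \sum_(k < n) lam k * Cr (Q k) q.
Proof.
rewrite /Cr /mix; under eq_bigr do rewrite mulr_suml.
rewrite exchange_big /=; apply: eq_bigr => k _; rewrite mulr_sumr.
by apply: eq_bigr => x _; rewrite mulrA.
Qed.

End Helpers.


Theorem mainTheorem10 (R : realType) (X : finType) (p : nat) (hp : (1 <= p)%N)
  (Pi : (X -> R) -> Prop) (pistar : (X -> R) -> (X -> R))
  (HPi_distr : forall q, Pi q -> is_distr q)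
  (HPi_conv : forall q1 q2 (t : R), Pi q1 -> Pi q2 -> 0 <= t <= 1 ->
      Pi (fun x => t * q1 x + (1 - t) * q2 x))
  (Hmem : forall P, is_distr P -> Pi (pistar P))
  (Hmin : forall P, is_distr P -> forall q, Pi q -> (KL P (pistar P) <= KL P q)%E)
  (Huniq : forall P, is_distr P -> forall q, Pi q ->
      (forall q', Pi q' -> (KL P q <= KL P q')%E) -> q = pistar P)
  (Hpyth : forall P, is_distr P -> forall q, Pi q ->
      KL P q = (KL P (pistar P) + KL (pistar P) q)%E)
  (phat : 'I_p -> X -> R) (Hphat : forall k, is_distr (phat k))
  (Hfin : forall k, (KL (phat k) (pistar (phat k)) < +oo)%E)
  (lam : 'I_p -> R) (Hlam : in_simplex lam) :
  pistar (mix lam phat) = mix lam (fun k => pistar (phat k)).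
Proof.
have [l0 l1] := Hlam.
set P := mix lam phat.
set m := mix lam (fun k => pistar (phat k)).
have HP : is_distr P.
  split.
    by move=> x; apply: sumr_ge0 => k _; rewrite mulr_ge0 //; case: (Hphat k).
  rewrite /P /mix exchange_big /=.
  under eq_bigr do rewrite -mulr_sumr (Hphat _).2 mulr1.
  exact: l1.
have Hpi k : Pi (pistar (phat k)) := Hmem _ (Hphat k).
have Hm : Pi m by apply: mix_in => //.
have pd k : is_distr (pistar (phat k)) := HPi_distr _ (Hpi k).
have ph0 k x : 0 <= phat k x by case: (Hphat k).
have pi0 k x : 0 <= pistar (phat k) x by case: (pd k).
have sk k : supp (phat k) (pistar (phat k)) := KL_supp (Hfin k).
pose D k := Hn (phat k) - Lf (phat k) (pistar (phat k)) - Hn (pistar (phat k)).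
pose K := Hn P - \sum_(k < p) lam k * D k.
have key : forall q, Pi q -> supp P q ->
    (forall k, lam k != 0 -> supp (pistar (phat k)) q) /\ Lf P q + Cr m q = K.
  move=> q Hq hsq.
  have q0 x : 0 <= q x by case: (HPi_distr _ Hq).
  have skq k : lam k != 0 -> supp (phat k) q.
    move=> lk x px; apply: hsq.
    have lp : 0 < lam k by rewrite lt_def lk l0.
    have pp : 0 < phat k x by rewrite lt_def px ph0.
    have := mix_ge k x l0 ph0; rewrite -/P => h.
    by rewrite gt_eqF // (lt_le_trans _ h) // mulr_gt0.
  have part k : lam k != 0 -> supp (pistar (phat k)) q /\
      Lf (phat k) q = Lf (phat k) (pistar (phat k)) + Lf (pistar (phat k)) q.
    move=> lk.
    have E := Hpyth _ (Hphat k) _ Hq.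
    rewrite (KL_fin (skq k lk)) (KL_fin (sk k)) in E.
    have fin : (KL (pistar (phat k)) q < +oo)%E.
      by move: E; case: (KL (pistar (phat k)) q) => [r _|//|//]; exact: ltry.
    have s2 := KL_supp fin.
    split => //; move: E; rewrite (KL_fin s2) -EFinD.
    by move=> [].
  split; first by move=> k lk; case: (part k lk).
  rewrite (Lf_split (HP.1) q0 hsq) /K Cr_mix Cr_mix.
  have -> : \sum_(k < p) lam k * Cr (phat k) q =
      \sum_(k < p) lam k * D k + \sum_(k < p) lam k * Cr (pistar (phat k)) q.
    rewrite -big_split /=; apply: eq_bigr => k _.
    have [->|lk] := eqVneq (lam k) 0; first by rewrite !mul0r addr0.
    have [s2 e] := part k lk.
    rewrite (Lf_split (ph0 k) q0 (skq k lk)) (Lf_split (pi0 k) q0 s2) in e.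
    rewrite -mulrDr; congr (_ * _); rewrite /D; lra.
  lra.
have hsm : supp P m.
  move=> x /mix_nz [k [lk px]].
  have lp : 0 < lam k by rewrite lt_def lk l0.
  have pp : 0 < pistar (phat k) x by rewrite lt_def (sk k x px) pi0.
  have := mix_ge k x l0 pi0; rewrite -/m => h.
  by rewrite gt_eqF // (lt_le_trans _ h) // mulr_gt0.
symmetry; apply: Huniq => // q Hq.
have [hsq|nhsq] := pselect (supp P q); last first.
  have [x px qx] : exists2 x, P x != 0 & q x = 0.
    apply: contrapT => nE; apply: nhsq => x px; apply/eqP => qx; apply: nE; by exists x.
  by rewrite (KL_oo px qx) leey.
have [_ Km] := key m Hm hsm.
have [sq Kq] := key q Hq hsq.
rewrite (KL_fin hsm) (KL_fin hsq) lee_fin.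
have mq : supp m q.
  by move=> x /mix_nz [k [lk px]]; apply: sq lk x px.
have := gibbs (HPi_distr _ Hm) (HPi_distr _ Hq) mq.
lra.
Qed.
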